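(* A numerical semigroup $G$ is a $2$-permutation numerical semigroup if and only if $G$ is one of $$G_1=\langle 1,2\rangle=\mathbb{N},\qquad G_2=\langle 2,3\rangle=\{0\}\cup\{x\in\mathbb{N}: x\ge 2\},\qquad G_3=\langle 3,4\rangle=\{0,3,4\}\cup\{x\in\mathbb{N}:x\ge 6\}.$$
   Context: $\mathbb{N}=\{0,1,2,\dots\}$. A numerical semigroup is a submonoid $G$ of $(\mathbb{N},+,0)$ such that $\mathbb{N}\setminus G$ is finite; $\langle S\rangle$ denotes the submonoid of $\mathbb{N}$ generated by $S$. Write the elements of $G$ as $0=g_0<g_1<g_2<\cdots$. For a positive integer $n$, $G$ is called an $n$-permutation numerical semigroup if $G=\langle\{g_1,\dots,g_n\}\rangle$ and, for every $k\in\mathbb{N}$, the $n$-tuple $(g_{kn+1}\bmod n,\dots,g_{kn+n}\bmod n)$ contains exactly one representative of each residue class of $\mathbb{Z}/n\mathbb{Z}$. *)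

(* Defs.v *)
From mathcomp Require Import all_boot.
Set Implicit Arguments.
Unset Strict Implicit.
Unset Printing Implicit Defensive.

Definition numerical_semigroup (G : pred nat) : Prop :=
  [/\ G 0,
      (forall x y, G x -> G y -> G (x + y)) &
      exists N, forall x, N <= x -> G x].

Inductive gen (S : seq nat) : nat -> Prop :=
  | gen0 : gen S 0
  | genS : forall s x, s \in S -> gen S x -> gen S (s + x).

Definition cnt (G : pred nat) (x : nat) : nat := count G (iota 0 x).

(* is_kth G k x : x = g_k, the k-th element of G (0-indexed: g_0 = 0 < g_1 < ...) *)
Definition is_kth (G : pred nat) (k x : nat) : bool := G x && (cnt G x == k).

Definition perm_numerical_semigroup (n : nat) (G : pred nat) : Prop :=
  numerical_semigroup G /\
  (exists gs : seq nat,
      [/\ size gs = n,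
          (forall i, i < n -> is_kth G i.+1 (nth 0 gs i)) &
          (forall x, G x <-> gen gs x)]) /\
  (forall k : nat, exists xs : seq nat,
      [/\ size xs = n,
          (forall i, i < n -> is_kth G (k * n + i.+1) (nth 0 xs i)) &
          perm_eq [seq x %% n | x <- xs] (iota 0 n)]).

(* Main.v *)
Require Import Defs.
From mathcomp Require Import all_boot zify.
Set Implicit Arguments. Unset Strict Implicit.

Lemma cntS (G : pred nat) x : cnt G x.+1 = cnt G x + G x.
Proof. by rewrite /cnt -addn1 iotaD count_cat /= addn0. Qed.

Lemma cnt_add (G : pred nat) x y : cnt G (x + y) = cnt G x + count G (iota x y).
Proof. by rewrite /cnt iotaD count_cat. Qed.

Lemma cnt_lt (G : pred nat) x y : x < y -> G x -> cnt G x < cnt G y.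
Proof.
move=> hxy hG; have -> : y = x + (y - x - 1).+1 by lia.
rewrite cnt_add /= hG; lia.
Qed.

Lemma kth_uniq (G : pred nat) k x y : is_kth G k x -> is_kth G k y -> x = y.
Proof.
move=> /andP[hx /eqP cx] /andP[hy /eqP cy].
case: (ltngtP x y) => // h.
- by have := cnt_lt h hx; rewrite cx cy ltnn.
- by have := cnt_lt h hy; rewrite cx cy ltnn.
Qed.

Lemma cnt_next (G : pred nat) p q : G p -> p < q ->
  (forall x, p < x < q -> G x -> False) -> cnt G q = (cnt G p).+1.
Proof.
move=> hp hpq hno.
have -> : q = p.+1 + (q - p.+1) by lia.
rewrite cnt_add cntS hp.
rewrite (eq_in_count (a2 := pred0)); first by rewrite count_pred0 addn0 addn1.
move=> x; rewrite mem_iota => hx /=; apply/negP => hG; apply: (hno x) => //; lia.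
Qed.

Lemma genP a b x : gen [:: a; b] x <-> exists i j, x = i*a + j*b.
Proof.
split.
- elim=> [|s y hs _ [i [j ->]]]; first by exists 0, 0.
  move: hs; rewrite !inE => /orP[/eqP->|/eqP->].
  + by exists i.+1, j; rewrite mulSn addnA.
  + by exists i, j.+1; rewrite mulSn; lia.
- move=> [i [j ->]].
  have hj : gen [:: a; b] (j * b).
    elim: j => [|j ih]; first exact: gen0.
    by rewrite mulSn; apply: genS => //; rewrite !inE eqxx orbT.
  elim: i => [|i ih]; first by rewrite add0n.
  by rewrite mulSn -addnA; apply: genS => //; rewrite !inE eqxx.
Qed.

Lemma pair_neq (u v : nat) : perm_eq [:: u; v] (iota 0 2) -> u != v.
Proof.
move=> /perm_uniq h; have : uniq [:: u; v] by rewrite h.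
by rewrite /= inE andbT.
Qed.

Lemma ns_one (G : pred nat) m : numerical_semigroup G -> 0 < m ->
  (forall y, G y -> m %| y) -> m = 1.
Proof.
move=> [_ _ [N hN]] hm hd.
have hN' : N <= N * m + 1 by rewrite (leq_trans (leq_pmulr N hm)) // leq_addr.
have := hd (N * m + 1) (hN _ hN').
by rewrite dvdn_addr ?dvdn_mull // dvdn1 => /eqP.
Qed.

Lemma gapL (G : pred nat) a c p q :
  (forall y, G y <-> exists d j, j <= d /\ y = d*a + j*c) -> q <= 5 * a ->
  (forall d j, j <= d -> d < 5 -> p < d*a+j*c < q -> False) ->
  forall x, p < x < q -> G x -> False.
Proof.
move=> HG hq H x /andP[h1 h2] /HG [d [j [hj hx]]]; subst x.
apply: (H d j hj); last by rewrite h1 h2.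
case: (ltnP d 5) => // h5.
have : 5 * a <= d * a by rewrite leq_mul2r h5 orbT.
lia.
Qed.

Ltac gap HG := apply: (gapL HG); [lia|];
  move=> [|[|[|[|[|?]]]]] [|[|[|[|[|?]]]]] //= ? ? ?; lia.

Ltac mem HG d j := apply/HG; exists d, j; split; [done|lia].

Lemma step (G : pred nat) p q n : G p -> cnt G p = n -> p < q ->
  (forall x, p < x < q -> G x -> False) -> cnt G q = n.+1.
Proof. by move=> hp <- hpq hno; apply: cnt_next. Qed.

Lemma big_case (G : pred nat) a c : numerical_semigroup G -> 4 <= a -> 0 < c < a -> c %% 2 = 1 ->
 (forall y, G y <-> exists d j, j <= d /\ y = d*a + j*c) ->
 cnt G (a + c) = 2 ->
 (forall k v1 v2, is_kth G (k*2+1) v1 -> is_kth G (k*2+2) v2 -> v1 %% 2 != v2 %% 2) -> False.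
Proof.
move=> NS ha hc hc2 HG c2 Hp.
have c3 : cnt G (2*a) = 3.
  apply: (step (p := a + c)); [mem HG 1 1|exact c2|lia|gap HG].
have c4 : cnt G (2*a+c) = 4.
  apply: (step (p := 2*a)); [mem HG 2 0|exact c3|lia|gap HG].
have kth : forall k v, G v -> cnt G v = k -> is_kth G k v.
  by move=> k v hv hc'; rewrite /is_kth hv hc' eqxx.
case: (ltngtP a (2*c)) => hac.
- have c5 : cnt G (3*a) = 5.
    apply: (step (p := 2*a+c)); [mem HG 2 1|exact c4|lia|gap HG].
  have c6 : cnt G (2*a+2*c) = 6.
    apply: (step (p := 3*a)); [mem HG 3 0|exact c5|lia|gap HG].
  have c7 : cnt G (3*a+c) = 7.
    apply: (step (p := 2*a+2*c)); [mem HG 2 2|exact c6|lia|gap HG].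
  have c8 : cnt G (4*a) = 8.
    apply: (step (p := 3*a+c)); [mem HG 3 1|exact c7|lia|gap HG].
  have /eqP h1 := Hp 2 _ _ (kth _ (3*a) ltac:(mem HG 3 0) c5) (kth _ (2*a+2*c) ltac:(mem HG 2 2) c6).
  have /eqP h2 := Hp 3 _ _ (kth _ (3*a+c) ltac:(mem HG 3 1) c7) (kth _ (4*a) ltac:(mem HG 4 0) c8).
  lia.
- have c5 : cnt G (2*a+2*c) = 5.
    apply: (step (p := 2*a+c)); [mem HG 2 1|exact c4|lia|gap HG].
  have c6 : cnt G (3*a) = 6.
    apply: (step (p := 2*a+2*c)); [mem HG 2 2|exact c5|lia|gap HG].
  have c7 : cnt G (3*a+c) = 7.
    apply: (step (p := 3*a)); [mem HG 3 0|exact c6|lia|gap HG].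
  have c8 : cnt G (3*a+2*c) = 8.
    apply: (step (p := 3*a+c)); [mem HG 3 1|exact c7|lia|gap HG].
  have /eqP h1 := Hp 2 _ _ (kth _ (2*a+2*c) ltac:(mem HG 2 2) c5) (kth _ (3*a) ltac:(mem HG 3 0) c6).
  case: (ltngtP a (3*c)) => hac3.
  + have c9 : cnt G (4*a) = 9.
      apply: (step (p := 3*a+2*c)); [mem HG 3 2|exact c8|lia|gap HG].
    have c10 : cnt G (3*a+3*c) = 10.
      apply: (step (p := 4*a)); [mem HG 4 0|exact c9|lia|gap HG].
    have /eqP h2 := Hp 4 _ _ (kth _ (4*a) ltac:(mem HG 4 0) c9) (kth _ (3*a+3*c) ltac:(mem HG 3 3) c10).
    lia.
  + have c9 : cnt G (3*a+3*c) = 9.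
      apply: (step (p := 3*a+2*c)); [mem HG 3 2|exact c8|lia|gap HG].
    have c10 : cnt G (4*a) = 10.
      apply: (step (p := 3*a+3*c)); [mem HG 3 3|exact c9|lia|gap HG].
    have /eqP h2 := Hp 4 _ _ (kth _ (3*a+3*c) ltac:(mem HG 3 3) c9) (kth _ (4*a) ltac:(mem HG 4 0) c10).
    lia.
    suff : c = 1 by lia.
    apply: (ns_one NS); first lia.
    move=> y /HG [d [j [_ ->]]]; apply/dvdnP; exists (3*d+j); nia.
- suff : c = 1 by lia.
  apply: (ns_one NS); first lia.
  move=> y /HG [d [j [_ ->]]]; apply/dvdnP; exists (2*d+j); nia.
Qed.

Lemma cnt_lin (P : pred nat) m x0 : cnt P x0 = x0 - m -> m <= x0 ->
  (forall x, x0 <= x -> P x) -> forall x, x0 <= x -> cnt P x = x - m.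
Proof.
move=> h0 hm hP x hx; rewrite -(subnKC hx).
elim: (x - x0) => [|n ih]; first by rewrite addn0.
by rewrite addnS cntS ih hP ?leq_addr //; lia.
Qed.

Lemma to_bool (G : pred nat) gs (P : pred nat) :
  (forall x, G x <-> gen gs x) -> (forall x, gen gs x <-> P x) -> forall x, G x = P x.
Proof. move=> h1 h2 x; apply/idP/idP => h; [apply/h2/h1 | apply/h1/h2] => //. Qed.

Lemma cnt_eq (G P : pred nat) : (forall x, G x = P x) -> forall x, cnt G x = cnt P x.
Proof. by move=> h x; apply: eq_count. Qed.

Lemma kth_eq (G P : pred nat) : (forall x, G x = P x) -> forall k x, is_kth G k x = is_kth P k x.
Proof. by move=> h k x; rewrite /is_kth h (cnt_eq h). Qed.

Lemma gen1 x : gen [:: 1; 2] x <-> predT x.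
Proof. split => // _; apply/genP; exists x, 0; lia. Qed.

Lemma gen2 x : gen [:: 2; 3] x <-> (x != 1).
Proof.
rewrite genP; split.
- move=> [i [j ->]]; apply/eqP; lia.
- move=> /eqP h; case: (boolP (x %% 2 == 0)) => /eqP h2.
  + exists (x %/ 2), 0; lia.
  + exists ((x - 3) %/ 2), 1; lia.
Qed.

Lemma gen3 x : gen [:: 3; 4] x <-> [&& x != 1, x != 2 & x != 5].
Proof.
rewrite genP; split.
- move=> [i [j ->]]; apply/and3P; split; apply/eqP; lia.
- move=> /and3P [/eqP h1 /eqP h2 /eqP h5].
  have : x %% 3 < 3 by rewrite ltn_mod.
  case h: (x %% 3) => [|[|[|//]]] _.
  + exists (x %/ 3), 0; lia.
  + exists ((x - 4) %/ 3), 1; lia.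
  + exists ((x - 8) %/ 3), 2; lia.
Qed.

Lemma perm2 u v : u %% 2 != v %% 2 -> perm_eq [:: u %% 2; v %% 2] (iota 0 2).
Proof.
have : u %% 2 < 2 by rewrite ltn_mod. have : v %% 2 < 2 by rewrite ltn_mod.
by case: (u %% 2) => [|[|//]]; case: (v %% 2) => [|[|//]].
Qed.

Lemma rev_case (G P : pred nat) gs m x0 :
  numerical_semigroup G -> (forall x, G x <-> gen gs x) -> (forall x, gen gs x <-> P x) ->
  size gs = 2 -> (forall i, i < 2 -> is_kth P i.+1 (nth 0 gs i)) ->
  cnt P x0 = x0 - m -> m <= x0 -> (forall x, x0 <= x -> P x) ->
  (forall k, x0 <= k * 2 + 1 + m \/ exists xs : seq nat,
      [/\ size xs = 2,
          (forall i, i < 2 -> is_kth P (k * 2 + i.+1) (nth 0 xs i)) &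
          perm_eq [seq x %% 2 | x <- xs] (iota 0 2)]) ->
  perm_numerical_semigroup 2 G.
Proof.
move=> NS h1 h2 hs hk c0 hm hP hsmall.
have HGP := to_bool h1 h2.
split => //; split.
  exists gs; split => // i hi; rewrite (kth_eq HGP); exact: hk.
move=> k; case: (hsmall k) => [hb|[xs [s1 s2 s3]]]; last first.
  by exists xs; split => // i hi; rewrite (kth_eq HGP); exact: s2.
exists [:: k*2+1+m; k*2+2+m]; split => //.
  move=> [|[|//]] _ /=; rewrite (kth_eq HGP) /is_kth hP ?(cnt_lin c0 hm hP); try lia;
  apply/eqP; lia.
by apply: perm2; apply/eqP; lia.
Qed.

Theorem mainTheorem1 (G : pred nat) :
  numerical_semigroup G ->
  (perm_numerical_semigroup 2 G <->
     (forall x, G x <-> gen [:: 1; 2] x) \/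
     (forall x, G x <-> gen [:: 2; 3] x) \/
     (forall x, G x <-> gen [:: 3; 4] x)).
Proof.
move=> NS; split; last first.
  case=> [h|[h|h]].
  - apply: (rev_case (m := 0) (x0 := 0) NS h gen1) => //.
    + by move=> [|[|//]].
    + by move=> k; left.
  - apply: (rev_case (m := 1) (x0 := 2) NS h gen2) => //.
    + by move=> [|[|//]].
    + by move=> x hx; apply/eqP; lia.
    + by move=> k; left; lia.
  - apply: (rev_case (m := 3) (x0 := 6) NS h gen3) => //.
    + by move=> [|[|//]].
    + by move=> x hx; apply/and3P; split; apply/eqP; lia.
    + move=> [|k]; last by left; lia.
      right; exists [:: 3; 4]; split => //.
      by move=> [|[|//]].
move=> [_ [[gs [Hsz Hk Hgen]] Hperm]].
have Hp : forall k v1 v2, is_kth G (k*2+1) v1 -> is_kth G (k*2+2) v2 -> v1 %% 2 != v2 %% 2.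
  move=> k v1 v2 h1 h2; have [xs [s1 s2 s3]] := Hperm k.
  case: xs s1 s2 s3 => [|x0 [|x1 [|//]]] // _ s2 s3.
  have e0 := kth_uniq (s2 0 isT) h1; have e1 := kth_uniq (s2 1 isT) h2.
  by move: s3; rewrite /= -e0 -e1 => /pair_neq.
case: gs Hsz Hk Hgen => [|a [|b [|//]]] // _ Hk Hgen.
have ha := Hk 0 isT; have hb := Hk 1 isT; rewrite /= in ha hb.
have HG0 : forall y, G y <-> exists i j, y = i*a + j*b.
  by move=> y; rewrite Hgen genP.
have /andP[Ga /eqP ca] := ha; have /andP[Gb /eqP cb] := hb.
have a0 : 0 < a by case: a {Hk Hgen HG0 ha hb Ga} ca.
have ab : a < b.
  case: (ltngtP a b) => // h.
  - by have := cnt_lt h Gb; rewrite ca cb.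
  - by move: ca; rewrite h cb.
have G2a : G (2*a) by apply/HG0; exists 2, 0; lia.
have b2a : b <= 2 * a.
  case: (leqP b (2*a)) => // h.
  have := cnt_lt h G2a; have := cnt_lt (_ : a < 2 * a) Ga; rewrite ca cb; lia.
have [hlt|heq] : b < 2*a \/ b = 2*a by lia.
2:{
  have a1 : a = 1.
    apply: (ns_one NS a0) => y /HG0 [i [j ->]]; apply/dvdnP; exists (i + 2*j); nia.
  left; move=> x; rewrite Hgen; subst a; by rewrite heq.
}
have hp0 := Hp 0 _ _ ha hb.
case: (leqP 4 a) => h4; last first.
  right; have : (a = 2 /\ b = 3) \/ (a = 3 /\ b = 4).
    move/eqP: hp0 => hp0; lia.
  by case=> [[ea eb]|[ea eb]]; [left|right] => x; rewrite Hgen ea eb.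
exfalso; apply: (big_case (c := b - a) NS h4) => //.
- lia.
- move/eqP: hp0 => hp0; lia.
- move=> y; rewrite HG0; split.
  + move=> [i [j ->]]; exists (i + j), j; split; [lia|nia].
  + move=> [d [j [hj ->]]]; exists (d - j), j; nia.
- by rewrite subnKC // ltnW.
Qed.
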